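(* Let $\rho_{AB}$ be positive semidefinite on $\mathcal{H}_A\otimes\mathcal{H}_B$ with $0<\operatorname{tr}\rho_{AB}\le1$, and let $\sigma_B$ be a normalized density operator on $\mathcal{H}_B$. Then $$D_{\max}(\rho_{AB}\|\mathbb{1}_A\otimes\sigma_B)\ge\log\Gamma_C(\rho_{AB}|\sigma_B)-\log\operatorname{tr}\rho_{AB}.$$
   Context: Hilbert spaces are finite-dimensional; $\log$ is binary; inverses are generalized inverses (on the support). $D_{\max}(\rho\|\tau)=\inf\{\lambda\in\mathbb{R}:\rho\le2^\lambda\tau\}$. $\Gamma_C(\rho_{AB}|\sigma_B):=\operatorname{tr}\big((\rho_{AB}(\mathbb{1}_A\otimes\sigma_B^{-1/2}))^2\big)$. *)

(* Defs.v *)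
(* Finite-dimensional Hilbert spaces H_A = C^dA, H_B = C^dB, with C = R[i]
   the complex numbers over an arbitrary real field R : realType.
   Operators on H_A (x) H_B are 'M[R[i]]_(dA * dB) (Kronecker product). *)
From HB Require Import structures.
From mathcomp Require Import all_boot all_order all_algebra.
From mathcomp Require Import all_classical all_reals all_analysis.
From mathcomp Require Import complex.
Set Implicit Arguments. Unset Strict Implicit. Unset Printing Implicit Defensive.
Import Order.TTheory GRing.Theory Num.Theory.
Local Open Scope ring_scope.
Local Open Scope sesquilinear_scope.

Section QDefs.
Variable R : realType.
Local Notation C := (R[i]).

Definition psdmx n (A : 'M[C]_n) : Prop :=
  A \is hermsymmx /\ forall v : 'rV[C]_n, 0 <= (v *m A *m v ^t*) 0 0.

Definition loewner n (A B : 'M[C]_n) : Prop := psdmx (B - A).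

(* Kronecker (tensor) product; index k of 'I_(m1*m2) corresponds to the
   pair (k1,k2) via mxvec's enumeration of 'I_m1 * 'I_m2. *)
Definition tensmx m1 n1 m2 n2 (A : 'M[C]_(m1, n1)) (B : 'M[C]_(m2, n2))
  : 'M[C]_(m1 * m2, n1 * n2) :=
  \matrix_(k < m1 * m2, l < n1 * n2)
    (let ki := enum_val (cast_ord (esym (mxvec_cast m1 m2)) k) in
     let lj := enum_val (cast_ord (esym (mxvec_cast n1 n2)) l) in
     A ki.1 lj.1 * B ki.2 lj.2).

(* Generalized inverse square root sigma^{-1/2} (inverse on the support),
   via the spectral decomposition sigma = P^-1 diag(d) P of a Hermitian
   matrix; eigenvalue x |-> (sqrt x)^-1 for x > 0 and 0 for x = 0
   (note 0^-1 = 0 in MathComp). *)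
Definition inv_sqrtmx n (S : 'M[C]_n) : 'M[C]_n :=
  invmx (spectralmx S) *m diag_mx (map_mx (fun x => (sqrtC x)^-1) (spectral_diag S))
    *m spectralmx S.

Definition GammaC dA dB (rho : 'M[C]_(dA * dB)) (sigma : 'M[C]_dB) : C :=
  let X := rho *m tensmx (1%:M : 'M[C]_dA) (inv_sqrtmx sigma) in \tr (X *m X).

Definition log2 (x : R) : R := ln x / ln 2.

Definition elog2 (x : R) : \bar R := if 0 < x then (log2 x)%:E else -oo%E.

Definition Dmax n (rho tau : 'M[C]_n) : \bar R :=
  ereal_inf [set l%:E | l in [set l : R | loewner rho (real_complex R ((2 : R) `^ l) *: tau)]].

End QDefs.

(* Main.v *)
Require Import Defs.
From HB Require Import structures.
From mathcomp Require Import all_boot all_order all_algebra.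
From mathcomp Require Import all_classical all_reals all_analysis.
From mathcomp Require Import complex.
Import Order.TTheory GRing.Theory Num.Theory.
Local Open Scope ring_scope.

Set Implicit Arguments. Unset Strict Implicit. Unset Printing Implicit Defensive.
Local Open Scope sesquilinear_scope.

Section Tens.
Variable R : realType.
Local Notation C := (R[i]).

Definition tidx m n (k : 'I_(m*n)) : 'I_m * 'I_n :=
  enum_val (cast_ord (esym (mxvec_cast m n)) k).

Lemma tidx_bij m n : bijective (@tidx m n).
Proof.
exists (fun p => cast_ord (mxvec_cast m n) (enum_rank p)) => [k|p].
  by rewrite /tidx enum_valK cast_ordKV.
by rewrite /tidx cast_ordK enum_rankK.
Qed.

Lemma tidx_inj m n : injective (@tidx m n).
Proof. exact: bij_inj (tidx_bij m n). Qed.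

Lemma tensE m1 n1 m2 n2 (A : 'M[C]_(m1, n1)) (B : 'M[C]_(m2, n2)) k l :
  tensmx A B k l = A (tidx k).1 (tidx l).1 * B (tidx k).2 (tidx l).2.
Proof. by rewrite mxE. Qed.

Lemma sum_tidx m n (F : 'I_m -> 'I_n -> C) :
  \sum_(k < m*n) F (tidx k).1 (tidx k).2 = \sum_i \sum_j F i j.
Proof.
rewrite pair_big /=; symmetry.
by rewrite (reindex (@tidx m n)) //; apply: onW_bij; exact: tidx_bij.
Qed.

Lemma tens_mul m n p q r s (A : 'M[C]_(m,n)) (B : 'M[C]_(p,q))
  (C' : 'M[C]_(n, r)) (D : 'M[C]_(q, s)) :
  tensmx A B *m tensmx C' D = tensmx (A *m C') (B *m D).
Proof.
apply/matrixP=> k l; rewrite !mxE.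
under eq_bigr do rewrite !tensE.
rewrite (sum_tidx (fun i j => A (tidx k).1 i * B (tidx k).2 j * (C' i (tidx l).1 * D j (tidx l).2))).
rewrite -/(tidx k) -/(tidx l) /= !mxE mulr_suml; apply: eq_bigr => i _; rewrite mulr_sumr.
apply: eq_bigr => j _; by rewrite mulrACA.
Qed.

Lemma tens_adj m1 n1 m2 n2 (A : 'M[C]_(m1, n1)) (B : 'M[C]_(m2, n2)) :
  (tensmx A B)^t* = tensmx (A^t*) (B^t*).
Proof. by apply/matrixP=> k l; rewrite !mxE /= !mxE rmorphM. Qed.

Lemma tens11 m n : tensmx (1%:M : 'M[C]_m) (1%:M : 'M[C]_n) = 1%:M.
Proof.
apply/matrixP=> k l; rewrite tensE !mxE -(inj_eq (@tidx_inj m n)).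
case: (tidx k) (tidx l) => [a b] [c d]; rewrite xpair_eqE /=.
by case: (a == c); case: (b == d); rewrite ?mul1r ?mul0r.
Qed.

Lemma tens1B m n (X Y : 'M[C]_n) :
  tensmx (1%:M : 'M[C]_m) (X - Y) = tensmx 1%:M X - tensmx 1%:M Y.
Proof. by apply/matrixP=> k l; rewrite !(tensE, mxE) mulrBr. Qed.

Lemma tens1diag m n (f : 'rV[C]_n) :
  tensmx (1%:M : 'M[C]_m) (diag_mx f) = diag_mx (\row_k f 0 (tidx k).2).
Proof.
apply/matrixP=> k l; rewrite tensE !mxE.
have [->|nkl] := eqVneq k l; first by rewrite !eqxx mul1r.
rewrite mulr0n; have : tidx k != tidx l by rewrite (inj_eq (@tidx_inj m n)).
rewrite [tidx k]surjective_pairing [tidx l]surjective_pairing xpair_eqE negb_and.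
by case/orP => /negbTE ->; rewrite ?mul0r ?mulr0n ?mulr0.
Qed.

Definition nnform n (K : 'M[C]_n) := forall v : 'rV[C]_n, 0 <= (v *m K *m v ^t*) 0 0.

Lemma nnform_entry m n (X : 'M[C]_n) (U : 'M[C]_(m, n)) j :
  nnform X -> 0 <= (U *m X *m U ^t*) j j.
Proof.
move=> /(_ (row j U)); congr (0 <= _).
rewrite !mxE; apply: eq_bigr => k _; rewrite !mxE; congr (_ * _).
by apply: eq_bigr => i _; rewrite !mxE.
Qed.

Lemma nnform_conj m n (K : 'M[C]_m) (A : 'M[C]_(m, n)) :
  nnform K -> nnform (A ^t* *m K *m A).
Proof.
move=> HK v; have := HK (v *m A ^t*).
by rewrite trmx_mul map_mxM trmxCK !mulmxA.
Qed.

Lemma nnform_diag n (g : 'rV[C]_n) : (forall k, 0 <= g 0 k) -> nnform (diag_mx g).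
Proof.
move=> Hg v; rewrite mul_mx_diag !mxE; apply: sumr_ge0 => k _.
by rewrite !mxE mulrAC mulr_ge0 // mul_conjC_ge0.
Qed.

Lemma tr_diag_mul n (r : 'rV[C]_n) (Z : 'M[C]_n) :
  \tr (diag_mx r *m Z) = \sum_j r 0 j * Z j j.
Proof. by rewrite /mxtrace; apply: eq_bigr => j _; rewrite mul_diag_mx mxE. Qed.

Lemma herm_spec n (A : 'M[C]_n) : A \is hermsymmx ->
  A = (spectralmx A) ^t* *m diag_mx (spectral_diag A) *m spectralmx A.
Proof.
move=> /hermitian_normalmx /orthomx_spectralP {1}->.
by rewrite invmx_unitary // spectral_unitarymx.
Qed.

Lemma unitary_mul n (P : 'M[C]_n) : P \is unitarymx -> P *m P ^t* = 1%:M.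
Proof. by move/unitarymxP. Qed.

Lemma unitary_mulC n (P : 'M[C]_n) : P \is unitarymx -> P ^t* *m P = 1%:M.
Proof. by move/unitarymxP/mulmx1C. Qed.

Lemma psd_eig n (A : 'M[C]_n) : psdmx A -> forall j, 0 <= spectral_diag A 0 j.
Proof.
move=> [Ah HA] j; have E := herm_spec Ah.
set P := spectralmx A in E *; set D := spectral_diag A in E *.
have PU : P \is unitarymx by exact: spectral_unitarymx.
have := @nnform_entry _ _ A P j HA; rewrite E.
rewrite !mulmxA unitary_mul // mul1mx -mulmxA unitary_mul // mulmx1.
by rewrite mxE eqxx mulr1n.
Qed.

Lemma psd_tr n (A Y : 'M[C]_n) : psdmx A -> nnform Y -> 0 <= \tr (A *m Y).
Proof.
move=> Apsd HY; have Ah := Apsd.1; have eig := psd_eig Apsd.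
have E := herm_spec Ah.
set P := spectralmx A in E *; set D := spectral_diag A in E eig *.
have PU : P \is unitarymx by exact: spectral_unitarymx.
rewrite E -!mulmxA mxtrace_mulC -!mulmxA tr_diag_mul.
apply: sumr_ge0 => j _; apply: mulr_ge0; first exact: eig.
have := @nnform_entry _ _ Y P j HY; by rewrite !mulmxA.
Qed.

Lemma diag_mul n (a b : 'rV[C]_n) :
  diag_mx a *m diag_mx b = diag_mx (\row_i (a 0 i * b 0 i)).
Proof.
apply/matrixP=> i j; rewrite mul_diag_mx !mxE.
by have [->|nij] := eqVneq i j; rewrite ?mulr1n ?mulr0n ?mulr0.
Qed.

Lemma one_sub_diag n (f : 'rV[C]_n) :
  1%:M - diag_mx f = diag_mx (\row_i (1 - f 0 i)).
Proof.
apply/matrixP=> i j; rewrite !mxE.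
by have [->|nij] := eqVneq i j; rewrite ?mulr1n ?mulr0n ?subr0.
Qed.

Lemma conj_mul_unitary n (P X Y : 'M[C]_n) : P \is unitarymx ->
  (P ^t* *m X *m P) *m (P ^t* *m Y *m P) = P ^t* *m (X *m Y) *m P.
Proof.
move=> PU; rewrite !mulmxA -(mulmxA (P ^t* *m X) P (P ^t*)) unitary_mul //.
by rewrite mulmx1.
Qed.

Section Sigma.
Variables (n : nat) (sigma : 'M[C]_n).
Hypothesis Hs : psdmx sigma.
Let P := spectralmx sigma.
Let d := spectral_diag sigma.
Let s : 'rV[C]_n := map_mx (fun x => (sqrtC x)^-1) d.
Let PU : P \is unitarymx. Proof. exact: spectral_unitarymx. Qed.

Lemma S_def : inv_sqrtmx sigma = P ^t* *m diag_mx s *m P.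
Proof. by rewrite /inv_sqrtmx invmx_unitary. Qed.

Lemma s_ge0 j : 0 <= s 0 j.
Proof. by rewrite mxE invr_ge0 sqrtC_ge0 psd_eig. Qed.

Lemma S_herm : (inv_sqrtmx sigma) ^t* = inv_sqrtmx sigma.
Proof.
rewrite S_def !trmx_mul !map_mxM trmxCK tr_diag_mx map_diag_mx mulmxA.
congr (_ *m diag_mx _ *m _); apply/matrixP=> i j.
rewrite !mxE (ord1 i); have := s_ge0 j; rewrite mxE => /geC0_conj; exact.
Qed.

Definition e_sig : 'rV[C]_n := \row_j (1 - s 0 j * d 0 j * s 0 j).

Lemma e_sig_ge0 j : 0 <= e_sig 0 j.
Proof.
rewrite mxE /s !mxE -{2}(sqrtCK (d 0 j)).
have [->|nz] := eqVneq (sqrtC (d 0 j)) 0; first by rewrite invr0 !mul0r subr0 ler01.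
by rewrite expr2 mulrA mulVf // mul1r divff // subrr.
Qed.

Lemma one_sub_SsS :
  1%:M - inv_sqrtmx sigma *m sigma *m inv_sqrtmx sigma = P ^t* *m diag_mx e_sig *m P.
Proof.
have E : sigma = P ^t* *m diag_mx d *m P by exact: herm_spec Hs.1.
rewrite S_def {1}E !conj_mul_unitary // !diag_mul.
rewrite -[X in X - _](unitary_mulC PU) -[in X in X - _](mulmx1 (P ^t*)).
rewrite -mulmxBl -mulmxBr one_sub_diag; congr (_ *m diag_mx _ *m _).
by apply/matrixP=> i j; rewrite !mxE.
Qed.
End Sigma.
End Tens.

Lemma ReMC (R : realType) (x : R) (z : R[i]) :
  complex.Re (real_complex R x * z) = x * complex.Re z.
Proof. by case: z => a b /=; rewrite mul0r subr0. Qed.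

Lemma trB (R : realType) n (A B : 'M[R[i]]_n) (c : R[i]) :
  \tr (c *: A - B) = c * \tr A - \tr B.
Proof. by rewrite linearB /= linearZ. Qed.

Lemma trB1 (R : realType) n (A B : 'M[R[i]]_n) :
  \tr (A - B) = \tr A - \tr B.
Proof. by rewrite linearB. Qed.

Lemma key_ineq (R : realType) (dA dB : nat)
  (rho : 'M[R[i]]_(dA * dB)) (sigma : 'M[R[i]]_dB) (c : R[i]) :
  psdmx rho -> psdmx sigma -> 0 <= c ->
  loewner rho (c *: tensmx (1%:M : 'M[R[i]]_dA) sigma) ->
  GammaC rho sigma <= c * \tr rho.
Proof.
move=> Hr Hs c0 Hl.
set S := inv_sqrtmx sigma; set T := tensmx (1%:M : 'M[R[i]]_dA) S.
set M := tensmx (1%:M : 'M[R[i]]_dA) sigma.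
have TH : T ^t* = T by rewrite /T tens_adj S_herm // trmx1 map_mx1.
have Pi : T *m M *m T = tensmx (1%:M : 'M[R[i]]_dA) (S *m sigma *m S).
  by rewrite /T /M !tens_mul !mulmx1.
have Y1 : nnform (T ^t* *m (c *: M - rho) *m T) by apply: nnform_conj; exact: Hl.2.
have h1 := psd_tr Hr Y1; rewrite TH mulmxBr mulmxBl -scalemxAr -scalemxAl in h1.
rewrite mulmxBr -scalemxAr trB subr_ge0 in h1.
have -> : GammaC rho sigma = \tr (rho *m (T *m rho *m T)) by rewrite /GammaC !mulmxA.
apply: (le_trans h1); apply: ler_wpM2l => //.
have Y2 : nnform (1%:M - T *m M *m T).
  rewrite Pi -tens11 -tens1B one_sub_SsS //.
  rewrite -[X in tensmx X _](mulmx1 1%:M) -tens_mul.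
  rewrite -[X in tensmx X (_ *m _)](mulmx1 1%:M) -tens_mul.
  have -> : tensmx (1%:M : 'M[R[i]]_dA) ((spectralmx sigma) ^t*) = (tensmx (1%:M : 'M[R[i]]_dA) (spectralmx sigma)) ^t* by rewrite tens_adj trmx1 map_mx1.
  rewrite tens1diag; apply: nnform_conj; apply: nnform_diag => k.
  by rewrite mxE; exact: e_sig_ge0.
have h2 := psd_tr Hr Y2; rewrite mulmxBr mulmx1 trB1 subr_ge0 in h2.
exact: h2.
Qed.

Theorem lemma15 (R : realType) (dA dB : nat)
  (rho : 'M[R[i]]_(dA * dB)) (sigma : 'M[R[i]]_dB) :
  psdmx rho -> 0 < \tr rho -> \tr rho <= 1 ->
  psdmx sigma -> \tr sigma = 1 ->
  (Dmax rho (tensmx (1%:M : 'M[R[i]]_dA) sigma)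
     >= elog2 (complex.Re (GammaC rho sigma)) - elog2 (complex.Re (\tr rho)))%E.
Proof.
move=> Hr trpos _ Hs _.
apply/ereal_infP => _ [l Hl <-].
have c0 : 0 <= real_complex R (2 `^ l).
  by rewrite lecE /= eqxx /= powR_ge0.
have K := key_ineq Hr Hs c0 Hl.
move: K; rewrite lecE => /andP[_]; rewrite ReMC => K.
move: trpos; rewrite ltcE => /andP[_ tp].
have -> : elog2 (complex.Re (\tr rho)) = (log2 (complex.Re (\tr rho)))%:E.
  by rewrite /elog2 tp.
rewrite /elog2; case: ifPn => hG; last by rewrite /= leNye.
rewrite -EFinD lee_fin /log2 -mulrBl ler_pdivrMr ?ln_gt0 ?ltr1n //.
rewrite lerBlDr -ln_powR -lnM ?posrE ?powR_gt0 //.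
by rewrite ler_ln ?posrE ?mulr_gt0 ?powR_gt0.
Qed.
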